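(* Let $f$ be a real function on $[0,1]$ satisfying the H\''older condition $|f(x')-f(x'')|\le H|x'-x''|^{1/N}$ for all $x',x''\in[0,1]$, with $H>0$ and integer $N\ge 1$. Apply the algorithm PLT (described in the context) to $f$, with the stopping rule disregarded, and let $\{x^q\}$ be the resulting infinite sequence of trial points. Assume that the numbers of parallel trials satisfy $p(l)\le Q<\infty$ for all $l>1$. Let $\bar x\in[0,1]$ be a limit point of $\{x^q\}$. Then: (i) if $\bar x\in(0,1)$, there exist two subsequences of $\{x^q\}$, one converging to $\bar x$ from the left and the other converging to $\bar x$ from the right; (ii) if $f$ has a finite number of local extrema, then $\bar x$ is a local minimizer of $f$; (iii) if $\hat x$ is another limit point of $\{x^q\}$, then $f(\bar x)=f(\hat x)$; (iv) for all $q\ge 1$, $z^q=f(x^q)\ge f(\bar x)$.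
   Context: Algorithm PLT (parallel information algorithm with local tuning) for minimizing $f$ on $[0,1]$; parameters: integer $N\ge1$, reliability parameter $r>1$, small number $\xi>0$. A ''trial'' is an evaluation of $f$ at a point. Step 0: perform $q(1)>1$ initial trials at $x^1=0$, $x^2=1$ and some interior points $x^3,\dots,x^{q(1)}\in(0,1)$; set $l=1$. At iteration $l$, let $q=q(l)$ be the number of trials made so far. Step 1: order all trial points as $0=x_1<x_2<\dots<x_q=1$ and set $z_i=f(x_i)$. Step 2: for $2\le j\le q$ compute $\mu_j=\max\{\lambda_j,\gamma_j,\xi\}$, where $\lambda_j=\max\{|z_i-z_{i-1}|/(x_i-x_{i-1})^{1/N}: i\in I_j\}$ with $I_2=\{2,3\}$, $I_j=\{j-1,j,j+1\}$ for $3\le j\le q-1$, $I_q=\{q-1,q\}$; and $\gamma_j=\mu\,(x_j-x_{j-1})^{1/N}/(X^{\max})^{1/N}$ with $\mu=\max\{|z_i-z_{i-1}|/(x_i-x_{i-1})^{1/N}:2\le i\le q\}$ and $X^{\max}=\max\{x_i-x_{i-1}:2\le i\le q\}$. Step 3: for $2\le j\le q$ compute the characteristic $R(j)=r\mu_j(x_j-x_{j-1})^{1/N}+\frac{(z_j-z_{j-1})^2}{r\mu_j(x_j-x_{j-1})^{1/N}}-(z_j+z_{j-1})$. Step 4: choose $p=p(l+1)\le q(l)-1$ and distinct indices $t_1,\dots,t_p$ being the indices of the $p$ largest characteristics ($t_1=\arg\max\{R(i):1<i\le q\}$, $t_k=\arg\max\{R(i):1<i\le q,\ i\ne t_s, 1\le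 s\le k-1\}$); the new trial points are $x^{q+k}=\tfrac12(x_{t_k-1}+x_{t_k})-\frac{1}{2r}\left(\frac{|z_{t_k}-z_{t_k-1}|}{\mu_{t_k}}\right)^N\operatorname{sign}(z_{t_k}-z_{t_k-1})$, $1\le k\le p$. Step 5: evaluate $f$ at these $p$ points in parallel, set $q(l+1)=q(l)+p(l+1)$, $l\leftarrow l+1$, and return to Step 1. (In the paper $f(x)=\phi(y(x))$ where $y$ is a Peano-type space-filling curve mapping $[0,1]$ onto a hyperinterval $D\subset\mathbb R^N$ and $\phi$ is Lipschitz on $D$, which yields the H\''older condition above.) *)

(* Defs.v *)
From Stdlib Require Import Reals Lra Lia List.
Open Scope R_scope.

Definition rootN (N : nat) (x : R) : R :=
  if Rlt_dec 0 x then Rpower x (/ INR N) else 0.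

Definition sgn (y : R) : R :=
  if Rlt_dec 0 y then 1 else if Rlt_dec y 0 then -1 else 0.

Fixpoint maxfrom (g : nat -> R) (a k : nat) : R :=
  match k with
  | O => g a
  | S k' => Rmax (g (a + S k')%nat) (maxfrom g a k')
  end.

(* max_range g a b = max { g i : a <= i <= b }  (for a <= b) *)
Definition max_range (g : nat -> R) (a b : nat) : R := maxfrom g a (b - a).

(* Quantities of Steps 2-4 of PLT, for the current number q of trials and
   the sorted trial points s 1 < s 2 < ... < s q  (s i = x_i, z_i = f (s i)). *)
Definition dx (s : nat -> R) (i : nat) : R := s i - s (i - 1)%nat.

Definition rt (N : nat) (s : nat -> R) (i : nat) : R := rootN N (dx s i).

Definition slope (f : R -> R) (N : nat) (s : nat -> R) (i : nat) : R :=
  Rabs (f (s i) - f (s (i - 1)%nat)) / rt N s i.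

Definition mu_all (f : R -> R) (N q : nat) (s : nat -> R) : R :=
  max_range (slope f N s) 2 q.

Definition Xmax (q : nat) (s : nat -> R) : R := max_range (dx s) 2 q.

(* lambda_j = max over I_j = {j-1, j, j+1} intersected with {2,...,q} *)
Definition lam (f : R -> R) (N q : nat) (s : nat -> R) (j : nat) : R :=
  max_range (slope f N s) (Nat.max 2 (j - 1)) (Nat.min q (j + 1)).

Definition gam (f : R -> R) (N q : nat) (s : nat -> R) (j : nat) : R :=
  mu_all f N q s * rt N s j / rootN N (Xmax q s).

Definition muj (f : R -> R) (N : nat) (xi : R) (q : nat) (s : nat -> R)
  (j : nat) : R :=
  Rmax (lam f N q s j) (Rmax (gam f N q s j) xi).

Definition charR (f : R -> R) (N : nat) (r xi : R) (q : nat) (s : nat -> R)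
  (j : nat) : R :=
  let m := r * muj f N xi q s j * rt N s j in
  m + (f (s j) - f (s (j - 1)%nat)) ^ 2 / m - (f (s j) + f (s (j - 1)%nat)).

Definition newpt (f : R -> R) (N : nat) (r xi : R) (q : nat) (s : nat -> R)
  (t : nat) : R :=
  (s (t - 1)%nat + s t) / 2
  - / (2 * r) * (Rabs (f (s t) - f (s (t - 1)%nat)) / muj f N xi q s t) ^ N
      * sgn (f (s t) - f (s (t - 1)%nat)).

Definition sorted_arrangement (X : nat -> R) (q : nat) (s : nat -> R) : Prop :=
  (forall i, (1 <= i < q)%nat -> s i < s (i + 1)%nat) /\
  (forall i, (1 <= i <= q)%nat -> exists k, (1 <= k <= q)%nat /\ s i = X k) /\
  (forall k, (1 <= k <= q)%nat -> exists i, (1 <= i <= q)%nat /\ s i = X k).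

(* One iteration of PLT: from q = q(l) trials to q' = q(l+1) trials,
   with p = p(l+1) new trials X (q+1), ..., X (q+p). *)
Definition PLT_step (f : R -> R) (N : nat) (r xi : R) (X : nat -> R)
  (q q' : nat) : Prop :=
  exists s, sorted_arrangement X q s /\
  exists (p : nat) (t : nat -> nat),
    (1 <= p <= q - 1)%nat /\ q' = (q + p)%nat /\
    (forall k, (1 <= k <= p)%nat -> (2 <= t k <= q)%nat) /\
    (forall k k', (1 <= k <= p)%nat -> (1 <= k' <= p)%nat -> t k = t k' -> k = k') /\
    (* t_k = argmax of R(i) over 2 <= i <= q, i different from t_1..t_{k-1} *)
    (forall k, (1 <= k <= p)%nat -> forall i, (2 <= i <= q)%nat ->
       (forall k', (1 <= k' < k)%nat -> i <> t k') ->
       charR f N r xi q s i <= charR f N r xi q s (t k)) /\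
    (forall k, (1 <= k <= p)%nat -> X (q + k)%nat = newpt f N r xi q s (t k)).

(* X q = x^q (q >= 1) is a trial sequence produced by PLT (no stopping rule),
   qs l = q(l) for l >= 1. *)
Definition PLT_run (f : R -> R) (N : nat) (r xi : R) (X : nat -> R)
  (qs : nat -> nat) : Prop :=
  (1 < qs 1%nat)%nat /\ X 1%nat = 0 /\ X 2%nat = 1 /\
  (forall i, (3 <= i <= qs 1%nat)%nat -> 0 < X i < 1) /\
  (forall i j, (1 <= i <= qs 1%nat)%nat -> (1 <= j <= qs 1%nat)%nat ->
     X i = X j -> i = j) /\
  (forall l, (1 <= l)%nat -> PLT_step f N r xi X (qs l) (qs (S l))).

Definition holder (f : R -> R) (H : R) (N : nat) : Prop :=
  forall x y, 0 <= x <= 1 -> 0 <= y <= 1 ->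
    Rabs (f x - f y) <= H * rootN N (Rabs (x - y)).

Definition limit_point (X : nat -> R) (xb : R) : Prop :=
  forall eps, 0 < eps -> forall n : nat,
    exists q : nat, (n <= q)%nat /\ (1 <= q)%nat /\ Rabs (X q - xb) < eps.

Definition local_min_on01 (f : R -> R) (x : R) : Prop :=
  0 <= x <= 1 /\ exists d, 0 < d /\
    forall y, 0 <= y <= 1 -> Rabs (y - x) < d -> f x <= f y.

Definition local_max_on01 (f : R -> R) (x : R) : Prop :=
  0 <= x <= 1 /\ exists d, 0 < d /\
    forall y, 0 <= y <= 1 -> Rabs (y - x) < d -> f y <= f x.

Definition local_extremum_on01 (f : R -> R) (x : R) : Prop :=
  local_min_on01 f x \/ local_max_on01 f x.

Definition finitely_many_local_extrema (f : R -> R) : Prop :=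
  exists L : list R, forall x, local_extremum_on01 f x -> In x L.

(* Main.v *)
Require Import Defs.
From Stdlib Require Import Reals.
From Stdlib Require Import Lra Lia List IndefiniteDescription.
Open Scope R_scope.

Lemma rootN_nonneg N x : 0 <= rootN N x.
Proof. unfold rootN; destruct (Rlt_dec 0 x); [unfold Rpower; left; apply exp_pos | lra]. Qed.

Lemma rootN_pos N x : 0 < x -> 0 < rootN N x.
Proof. intro h; unfold rootN; destruct (Rlt_dec 0 x); [unfold Rpower; apply exp_pos | lra]. Qed.

Lemma INR_N_pos N : (1 <= N)%nat -> 0 < INR N.
Proof. intro; apply lt_0_INR; lia. Qed.

Lemma rootN_mono N x y : (1 <= N)%nat -> 0 <= x <= y -> rootN N x <= rootN N y.
Proof.
  intros hN [h1 h2]; unfold rootN.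
  destruct (Rlt_dec 0 x); destruct (Rlt_dec 0 y); try lra.
  - apply Rle_Rpower_l; [|lra]. left; apply Rinv_0_lt_compat, INR_N_pos; auto.
  - unfold Rpower; left; apply exp_pos.
Qed.

Lemma rootN_powN N x : (1 <= N)%nat -> 0 < x -> (rootN N x) ^ N = x.
Proof.
  intros hN hx; unfold rootN; destruct (Rlt_dec 0 x); [|lra].
  rewrite <- Rpower_pow by (unfold Rpower; apply exp_pos).
  rewrite Rpower_mult, Rinv_l, Rpower_1; auto.
  apply Rgt_not_eq, INR_N_pos; auto.
Qed.

Lemma rootN_of_pow N z : (1 <= N)%nat -> 0 < z -> rootN N (z ^ N) = z.
Proof.
  intros hN hz; unfold rootN; destruct (Rlt_dec 0 (z ^ N)).
  - rewrite <- Rpower_pow by auto. rewrite Rpower_mult, Rinv_r, Rpower_1; auto.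
    apply Rgt_not_eq, INR_N_pos; auto.
  - exfalso; apply n, pow_lt; auto.
Qed.

Lemma rootN_le_of N x z : (1 <= N)%nat -> 0 < z -> x <= z ^ N -> rootN N x <= z.
Proof.
  intros hN hz hx. destruct (Rle_dec x 0).
  - unfold rootN; destruct (Rlt_dec 0 x); lra.
  - rewrite <- (rootN_of_pow N z) by auto. apply rootN_mono; auto; lra.
Qed.

Lemma maxfrom_ge g a k i : (a <= i <= a + k)%nat -> g i <= maxfrom g a k.
Proof.
  revert i; induction k; intros i hi; simpl.
  - replace i with a by lia; lra.
  - destruct (Nat.eq_dec i (a + S k)) as [->|ne].
    + apply Rmax_l.
    + eapply Rle_trans; [apply IHk; lia| apply Rmax_r].
Qed.

Lemma maxfrom_le g a k B : (forall i, (a <= i <= a + k)%nat -> g i <= B) -> maxfrom g a k <= B.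
Proof.
  induction k; intros h; simpl.
  - apply h; lia.
  - apply Rmax_lub; [apply h; lia| apply IHk; intros; apply h; lia].
Qed.

Lemma max_range_ge g a b i : (a <= i <= b)%nat -> g i <= max_range g a b.
Proof. intros; unfold max_range; apply maxfrom_ge; lia. Qed.

Lemma max_range_le g a b B : (a <= b)%nat -> (forall i, (a <= i <= b)%nat -> g i <= B) -> max_range g a b <= B.
Proof. intros; unfold max_range; apply maxfrom_le; intros; apply H0; lia. Qed.

Lemma Rdiv_le_0_compat a b : 0 <= a -> 0 < b -> 0 <= a / b.
Proof. intros; unfold Rdiv; apply Rmult_le_pos; [auto| left; apply Rinv_0_lt_compat; auto]. Qed.

Lemma Rabs_le_inv x y : Rabs x <= y -> - y <= x <= y.
Proof. intro h; unfold Rabs in h; destruct (Rcase_abs x); split; lra. Qed.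


Definition kap (r : R) := (1 - / r) / 2.

Lemma kap_bounds r : 1 < r -> 0 < kap r < 1/2.
Proof.
  intro h; unfold kap. assert (0 < / r < 1).
  { split; [apply Rinv_0_lt_compat; lra|]. rewrite <- Rinv_1; apply Rinv_lt_contravar; lra. }
  lra.
Qed.

Lemma charR_alg m za zb : 0 < m ->
  m + (zb - za) ^ 2 / m - (zb + za) >= -2 * zb + 3 * m / 4 /\
  m + (zb - za) ^ 2 / m - (zb + za) >= -2 * za + 3 * m / 4.
Proof.
  intro hm. split.
  - assert (E : m + (zb - za) ^ 2 / m - (zb + za) - (-2 * zb + 3 * m / 4) = (m/2 + (zb - za))^2 / m) by (field; lra).
    assert (0 <= (m/2 + (zb - za))^2 / m) by (apply Rdiv_le_0_compat; [apply pow2_ge_0| lra]). lra.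
  - assert (E : m + (zb - za) ^ 2 / m - (zb + za) - (-2 * za + 3 * m / 4) = (m/2 - (zb - za))^2 / m) by (field; lra).
    assert (0 <= (m/2 - (zb - za))^2 / m) by (apply Rdiv_le_0_compat; [apply pow2_ge_0| lra]). lra.
Qed.

Section Level.
Variables (f : R -> R) (N : nat) (r xi H : R) (X : nat -> R).
Hypotheses (HN : (1 <= N)%nat) (Hr : 1 < r) (Hxi : 0 < xi) (HH : 0 < H) (Hhol : holder f H N).
Variables (q : nat) (s : nat -> R).
Hypotheses (Hs : sorted_arrangement X q s) (Hin : forall k, (1 <= k <= q)%nat -> 0 <= X k <= 1) (Hq : (2 <= q)%nat).

Lemma s_lt i j : (1 <= i)%nat -> (i < j)%nat -> (j <= q)%nat -> s i < s j.
Proof.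
  intros h1 h2 h3. destruct Hs as [Hsort _].
  induction j as [|j IH]; [lia|].
  destruct (Nat.eq_dec i j) as [->|ne].
  - replace (S j) with (j + 1)%nat by lia. apply Hsort; lia.
  - eapply Rlt_trans; [apply IH; lia|]. replace (S j) with (j + 1)%nat by lia. apply Hsort; lia.
Qed.

Lemma s_le i j : (1 <= i)%nat -> (i <= j)%nat -> (j <= q)%nat -> s i <= s j.
Proof. intros. destruct (Nat.eq_dec i j) as [->|]; [lra|]. left; apply s_lt; lia. Qed.

Lemma s_lt_inv i j : (1 <= i <= q)%nat -> (1 <= j <= q)%nat -> s i < s j -> (i < j)%nat.
Proof. intros hi hj h. destruct (Nat.lt_ge_cases i j); auto. assert (s j <= s i) by (apply s_le; lia). lra. Qed.

Lemma s_inj i j : (1 <= i <= q)%nat -> (1 <= j <= q)%nat -> s i = s j -> i = j.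
Proof. intros hi hj h. destruct (Nat.lt_total i j) as [c|[c|c]]; auto;
  [assert (s i < s j) by (apply s_lt; lia) | assert (s j < s i) by (apply s_lt; lia)]; lra. Qed.

Lemma s_in01 i : (1 <= i <= q)%nat -> 0 <= s i <= 1.
Proof. intro hi. destruct Hs as [_ [H2 _]]. destruct (H2 i hi) as [k [hk ->]]. auto. Qed.

Lemma dx_pos j : (2 <= j <= q)%nat -> 0 < dx s j.
Proof. intro hj. unfold dx. assert (s (j-1)%nat < s j) by (apply s_lt; lia). lra. Qed.

Lemma dx_le1 j : (2 <= j <= q)%nat -> dx s j <= 1.
Proof. intro hj. unfold dx. pose proof (s_in01 j ltac:(lia)); pose proof (s_in01 (j-1) ltac:(lia)). lra. Qed.

Lemma rt_pos j : (2 <= j <= q)%nat -> 0 < rt N s j.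
Proof. intro; unfold rt; apply rootN_pos, dx_pos; auto. Qed.

Lemma dz_bound j : (2 <= j <= q)%nat -> Rabs (f (s j) - f (s (j-1)%nat)) <= H * rt N s j.
Proof.
  intro hj. unfold rt, dx. rewrite <- (Rabs_pos_eq (s j - s (j-1)%nat)).
  - apply Hhol; apply s_in01; lia.
  - pose proof (dx_pos j hj); unfold dx in *; lra.
Qed.

Lemma slope_le_H j : (2 <= j <= q)%nat -> slope f N s j <= H.
Proof.
  intro hj. unfold slope. pose proof (rt_pos j hj). pose proof (dz_bound j hj).
  apply Rmult_le_reg_r with (rt N s j); auto. unfold Rdiv; rewrite Rmult_assoc, Rinv_l; lra.
Qed.

Lemma slope_nonneg j : (2 <= j <= q)%nat -> 0 <= slope f N s j.
Proof. intro hj. unfold slope. apply Rdiv_le_0_compat; [apply Rabs_pos| apply rt_pos; auto]. Qed.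

Lemma mu_all_le : mu_all f N q s <= H.
Proof. unfold mu_all. apply max_range_le; [lia|]. intros; apply slope_le_H; lia. Qed.

Lemma mu_all_nonneg : 0 <= mu_all f N q s.
Proof. unfold mu_all. eapply Rle_trans; [apply (slope_nonneg 2); lia| apply max_range_ge; lia]. Qed.

Lemma Xmax_ge j : (2 <= j <= q)%nat -> dx s j <= Xmax q s.
Proof. intro; unfold Xmax; apply max_range_ge; lia. Qed.

Lemma gam_le j : (2 <= j <= q)%nat -> gam f N q s j <= H.
Proof.
  intro hj. unfold gam. pose proof (rt_pos j hj). pose proof (dx_pos j hj). pose proof (Xmax_ge j hj).
  assert (hR : 0 < rootN N (Xmax q s)) by (apply rootN_pos; lra).
  assert (rt N s j <= rootN N (Xmax q s)) by (unfold rt; apply rootN_mono; [exact HN| lra]).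
  pose proof mu_all_le; pose proof mu_all_nonneg.
  apply Rmult_le_reg_r with (rootN N (Xmax q s)); auto. unfold Rdiv; rewrite Rmult_assoc, Rinv_l by (apply Rgt_not_eq; lra).
  rewrite Rmult_1_r. apply Rle_trans with (mu_all f N q s * rootN N (Xmax q s)).
  - apply Rmult_le_compat_l; lra.
  - apply Rmult_le_compat_r; lra.
Qed.

Lemma lam_ge j : (2 <= j <= q)%nat -> slope f N s j <= lam f N q s j.
Proof. intro; unfold lam; apply max_range_ge; lia. Qed.

Lemma lam_le j : (2 <= j <= q)%nat -> lam f N q s j <= H.
Proof. intro; unfold lam; apply max_range_le; [lia|]. intros; apply slope_le_H; lia. Qed.

Lemma muj_ge_xi j : xi <= muj f N xi q s j.
Proof. unfold muj. eapply Rle_trans; [apply Rmax_r| apply Rmax_r]. Qed.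

Lemma muj_ge_slope j : (2 <= j <= q)%nat -> slope f N s j <= muj f N xi q s j.
Proof. intro. unfold muj. eapply Rle_trans; [apply lam_ge; auto| apply Rmax_l]. Qed.

Lemma muj_le j : (2 <= j <= q)%nat -> muj f N xi q s j <= Rmax H xi.
Proof.
  intro hj. unfold muj. apply Rmax_lub; [eapply Rle_trans; [apply lam_le; auto| apply Rmax_l]|].
  apply Rmax_lub; [eapply Rle_trans; [apply gam_le; auto| apply Rmax_l]| apply Rmax_r].
Qed.

Lemma sgn_abs y : Rabs (sgn y) <= 1.
Proof. unfold sgn. destruct (Rlt_dec 0 y); [rewrite Rabs_R1; lra|]. destruct (Rlt_dec y 0).
  - rewrite Rabs_left by lra; lra.
  - rewrite Rabs_R0; lra. Qed.

Lemma newpt_bounds j : (2 <= j <= q)%nat ->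
  s (j-1)%nat + kap r * dx s j <= newpt f N r xi q s j <= s j - kap r * dx s j.
Proof.
  intro hj. unfold newpt, kap.
  set (d := f (s j) - f (s (j-1)%nat)). set (mu := muj f N xi q s j).
  pose proof (rt_pos j hj) as hrt. pose proof (muj_ge_slope j hj) as hms. pose proof (muj_ge_xi j) as hmx.
  fold mu in hms, hmx.
  assert (hA : Rabs d / mu <= rt N s j).
  { unfold slope in hms. fold d in hms.
    apply Rmult_le_reg_r with mu; [lra|]. unfold Rdiv; rewrite Rmult_assoc, Rinv_l, Rmult_1_r by (apply Rgt_not_eq; lra).
    apply Rmult_le_reg_r with (/ rt N s j); [apply Rinv_0_lt_compat; lra|].
    rewrite (Rmult_comm (rt N s j) mu), Rmult_assoc, Rinv_r, Rmult_1_r by (apply Rgt_not_eq; lra). exact hms. }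
  assert (hA0 : 0 <= Rabs d / mu) by (apply Rdiv_le_0_compat; [apply Rabs_pos| lra]).
  assert (hP : (Rabs d / mu) ^ N <= dx s j).
  { rewrite <- (rootN_powN N (dx s j)) by (auto; apply dx_pos; auto). apply pow_incr; split; auto. }
  assert (hP0 : 0 <= (Rabs d / mu) ^ N) by (apply pow_le; auto).
  pose proof (sgn_abs d) as hsg.
  assert (hT : Rabs (/ (2 * r) * (Rabs d / mu) ^ N * sgn d) <= / (2 * r) * dx s j).
  { rewrite Rabs_mult, Rabs_mult, (Rabs_pos_eq (/ (2*r))) by (left; apply Rinv_0_lt_compat; lra).
    rewrite (Rabs_pos_eq ((Rabs d / mu) ^ N)) by auto.
    assert (0 < / (2*r)) by (apply Rinv_0_lt_compat; lra).
    apply Rle_trans with (/ (2 * r) * (Rabs d / mu) ^ N * 1).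
    - apply Rmult_le_compat_l; [|auto]. apply Rmult_le_pos; lra.
    - rewrite Rmult_1_r. apply Rmult_le_compat_l; lra. }
  apply Rabs_le_inv in hT. unfold dx in *.
  assert (E : / (2 * r) * (s j - s (j - 1)%nat) = / r * (s j - s (j - 1)%nat) / 2) by (field; lra).
  rewrite E in hT. split; nra.
Qed.

Lemma charR_lower j : (2 <= j <= q)%nat ->
  charR f N r xi q s j >= -2 * f (s j) + 3 * (r * xi * rt N s j) / 4 /\
  charR f N r xi q s j >= -2 * f (s (j-1)%nat) + 3 * (r * xi * rt N s j) / 4.
Proof.
  intro hj. unfold charR. cbv zeta.
  pose proof (rt_pos j hj). pose proof (muj_ge_xi j).
  assert (hm : r * xi * rt N s j <= r * muj f N xi q s j * rt N s j).
  { apply Rmult_le_compat_r; [lra|]. apply Rmult_le_compat_l; lra. }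
  assert (0 < r * xi * rt N s j) by (apply Rmult_lt_0_compat; [apply Rmult_lt_0_compat|]; lra).
  destruct (charR_alg (r * muj f N xi q s j * rt N s j) (f (s (j-1)%nat)) (f (s j))) as [h1 h2]; [lra|].
  split; lra.
Qed.

Lemma charR_upper j : (2 <= j <= q)%nat ->
  charR f N r xi q s j <= - (f (s j) + f (s (j-1)%nat)) +
     (r * Rmax H xi + H * H / (r * xi)) * rt N s j.
Proof.
  intro hj. unfold charR. cbv zeta.
  pose proof (rt_pos j hj) as hrt. pose proof (muj_ge_xi j). pose proof (muj_le j hj).
  pose proof (dz_bound j hj) as hd.
  set (m := r * muj f N xi q s j * rt N s j). set (d := f (s j) - f (s (j-1)%nat)). fold d in hd.
  assert (hm1 : r * xi * rt N s j <= m).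
  { unfold m. apply Rmult_le_compat_r; [lra|]. apply Rmult_le_compat_l; lra. }
  assert (hm2 : m <= r * Rmax H xi * rt N s j).
  { unfold m. apply Rmult_le_compat_r; [lra|]. apply Rmult_le_compat_l; lra. }
  assert (hm0 : 0 < r * xi * rt N s j) by (apply Rmult_lt_0_compat; [apply Rmult_lt_0_compat|]; lra).
  assert (hd2 : d ^ 2 <= (H * rt N s j) ^ 2).
  { rewrite <- (pow2_abs d). apply pow_incr; split; [apply Rabs_pos| auto]. }
  assert (hq : d ^ 2 / m <= H * H / (r * xi) * rt N s j).
  { apply Rle_trans with ((H * rt N s j) ^ 2 / (r * xi * rt N s j)).
    - apply Rle_trans with ((H * rt N s j) ^ 2 / m).
      + unfold Rdiv; apply Rmult_le_compat_r; [left; apply Rinv_0_lt_compat; lra| auto].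
      + unfold Rdiv; apply Rmult_le_compat_l; [apply pow2_ge_0|]. apply Rinv_le_contravar; lra.
    - right; field; split; lra. }
  lra.
Qed.

End Level.


Definition StepW (f : R -> R) (N : nat) (r xi : R) (X : nat -> R)
  (q q' : nat) (s : nat -> R) (p : nat) (t : nat -> nat) : Prop :=
    sorted_arrangement X q s /\
    (1 <= p <= q - 1)%nat /\ q' = (q + p)%nat /\
    (forall k, (1 <= k <= p)%nat -> (2 <= t k <= q)%nat) /\
    (forall k k', (1 <= k <= p)%nat -> (1 <= k' <= p)%nat -> t k = t k' -> k = k') /\
    (forall k, (1 <= k <= p)%nat -> forall i, (2 <= i <= q)%nat ->
       (forall k', (1 <= k' < k)%nat -> i <> t k') ->
       charR f N r xi q s i <= charR f N r xi q s (t k)) /\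
    (forall k, (1 <= k <= p)%nat -> X (q + k)%nat = newpt f N r xi q s (t k)).

Lemma step_W f N r xi X q q' : PLT_step f N r xi X q q' -> exists s p t, StepW f N r xi X q q' s p t.
Proof. intros [s [h [p [t hh]]]]. exists s, p, t. split; auto. Qed.

Section Run.
Variables (f : R -> R) (N : nat) (r xi H : R) (X : nat -> R) (qs : nat -> nat).
Hypotheses (HN : (1 <= N)%nat) (Hr : 1 < r) (Hxi : 0 < xi) (HH : 0 < H) (Hhol : holder f H N).
Hypothesis (Hrun : PLT_run f N r xi X qs).

Definition InT (l : nat) (y : R) := exists k, (1 <= k <= qs l)%nat /\ X k = y.

Lemma getW l : (1 <= l)%nat -> exists s p t, StepW f N r xi X (qs l) (qs (S l)) s p t.
Proof. intro hl. apply step_W. destruct Hrun as [_ [_ [_ [_ [_ h]]]]]. auto. Qed.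

Lemma qs_step l : (1 <= l)%nat -> (qs l < qs (S l))%nat.
Proof. intro hl. destruct (getW l hl) as [s [p [t [_ [hp [e _]]]]]]. lia. Qed.

Lemma qs_ge l : (1 <= l)%nat -> (l + 1 <= qs l)%nat.
Proof.
  intro hl. induction l as [|l IH]; [lia|].
  destruct (Nat.eq_dec l 0) as [->|ne].
  - destruct Hrun as [h _]. lia.
  - pose proof (qs_step l ltac:(lia)). specialize (IH ltac:(lia)). lia.
Qed.

Lemma qs_mono l l' : (1 <= l)%nat -> (l <= l')%nat -> (qs l <= qs l')%nat.
Proof.
  intros hl hll. induction l' as [|l' IH]; [lia|].
  destruct (Nat.eq_dec l (S l')) as [->|ne]; [lia|].
  pose proof (qs_step l' ltac:(lia)). specialize (IH ltac:(lia)). lia.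
Qed.

Lemma all_in01_lvl l : (1 <= l)%nat -> forall k, (1 <= k <= qs l)%nat -> 0 <= X k <= 1.
Proof.
  intro hl. induction l as [|l IH]; [lia|].
  destruct (Nat.eq_dec l 0) as [->|ne].
  - destruct Hrun as [h1 [h2 [h3 [h4 _]]]]. intros k hk.
    destruct (Nat.eq_dec k 1) as [->|n1]; [rewrite h2; lra|].
    destruct (Nat.eq_dec k 2) as [->|n2]; [rewrite h3; lra|].
    specialize (h4 k ltac:(lia)); lra.
  - specialize (IH ltac:(lia)). intros k hk.
    destruct (Nat.le_gt_cases k (qs l)) as [c|c]; [apply IH; lia|].
    destruct (getW l ltac:(lia)) as [s [p [t [Hs [hp [e [ht [_ [_ hX]]]]]]]]].
    pose proof (qs_ge l ltac:(lia)).
    replace k with (qs l + (k - qs l))%nat by lia. rewrite hX by lia.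
    assert (hq : (2 <= qs l)%nat) by lia.
    assert (htk := ht (k - qs l)%nat ltac:(lia)).
    assert (hb : s (t (k - qs l) - 1)%nat + kap r * dx s (t (k - qs l)%nat) <= newpt f N r xi (qs l) s (t (k - qs l)%nat) <= s (t (k - qs l)%nat) - kap r * dx s (t (k - qs l)%nat)) by (eapply newpt_bounds; eauto).
    pose proof (dx_pos N X HN (qs l) s Hs hq (t (k - qs l)%nat) htk) as hd.
    pose proof (s_in01 X (qs l) s Hs IH (t (k - qs l)%nat) ltac:(lia)).
    pose proof (s_in01 X (qs l) s Hs IH (t (k - qs l) - 1)%nat ltac:(lia)).
    pose proof (kap_bounds r Hr).
    assert (0 < kap r * dx s (t (k - qs l)%nat)) by (apply Rmult_lt_0_compat; lra).
    lra.
Qed.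

Lemma X01 k : (1 <= k)%nat -> 0 <= X k <= 1.
Proof. intro hk. apply (all_in01_lvl k hk). pose proof (qs_ge k hk). lia. Qed.

Lemma Hin q : forall k, (1 <= k <= q)%nat -> 0 <= X k <= 1.
Proof. intros k hk; apply X01; lia. Qed.


Section Wr.
Variables (q : nat) (s : nat -> R).
Hypotheses (Hs : sorted_arrangement X q s) (Hq : (2 <= q)%nat).
Lemma w_s_lt i j : (1 <= i)%nat -> (i < j)%nat -> (j <= q)%nat -> s i < s j.
Proof. intros; eapply s_lt; eauto. Qed.
Lemma w_s_le i j : (1 <= i)%nat -> (i <= j)%nat -> (j <= q)%nat -> s i <= s j.
Proof. intros; eapply s_le; eauto. Qed.
Lemma w_s_lt_inv i j : (1 <= i <= q)%nat -> (1 <= j <= q)%nat -> s i < s j -> (i < j)%nat.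
Proof. intros; eapply s_lt_inv; eauto. Qed.
Lemma w_s_inj i j : (1 <= i <= q)%nat -> (1 <= j <= q)%nat -> s i = s j -> i = j.
Proof. intros; eapply s_inj; eauto. Qed.
Lemma w_s_in01 i : (1 <= i <= q)%nat -> 0 <= s i <= 1.
Proof. intros; eapply s_in01; eauto using Hin. Qed.
Lemma w_dx_pos j : (2 <= j <= q)%nat -> 0 < dx s j.
Proof. intros; eapply dx_pos; eauto. Qed.
Lemma w_rt_pos j : (2 <= j <= q)%nat -> 0 < rt N s j.
Proof. intros; eapply rt_pos; eauto. Qed.
Lemma w_newpt_bounds j : (2 <= j <= q)%nat ->
  s (j-1)%nat + kap r * dx s j <= newpt f N r xi q s j <= s j - kap r * dx s j.
Proof. intros; eapply newpt_bounds; eauto using Hin. Qed.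
Lemma w_charR_lower j : (2 <= j <= q)%nat ->
  charR f N r xi q s j >= -2 * f (s j) + 3 * (r * xi * rt N s j) / 4 /\
  charR f N r xi q s j >= -2 * f (s (j-1)%nat) + 3 * (r * xi * rt N s j) / 4.
Proof. intros; eapply charR_lower; eauto using Hin. Qed.
Lemma w_charR_upper j : (2 <= j <= q)%nat ->
  charR f N r xi q s j <= - (f (s j) + f (s (j-1)%nat)) +
     (r * Rmax H xi + H * H / (r * xi)) * rt N s j.
Proof. intros; eapply charR_upper; eauto using Hin. Qed.
End Wr.

Lemma InT_mono l l' y : (1 <= l)%nat -> (l <= l')%nat -> InT l y -> InT l' y.
Proof. intros h1 h2 [k [hk e]]. exists k; split; auto. pose proof (qs_mono l l' h1 h2). lia. Qed.

Lemma InT_01 l y : InT l y -> 0 <= y <= 1.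
Proof. intros [k [hk <-]]. apply X01; lia. Qed.

Lemma InT_0 l : (1 <= l)%nat -> InT l 0.
Proof. intro hl. exists 1%nat. destruct Hrun as [_ [h _]]. pose proof (qs_ge l hl). split; auto; lia. Qed.

Lemma InT_1 l : (1 <= l)%nat -> InT l 1.
Proof. intro hl. exists 2%nat. destruct Hrun as [_ [_ [h _]]]. pose proof (qs_ge l hl). split; auto; lia. Qed.

Lemma InT_s l q' s p t y : StepW f N r xi X (qs l) q' s p t ->
  InT l y <-> exists i, (1 <= i <= qs l)%nat /\ s i = y.
Proof.
  intros [[_ [h2 h3]] _]. split.
  - intros [k [hk <-]]. auto.
  - intros [i [hi <-]]. destruct (h2 i hi) as [k [hk e]]. exists k; auto.
Qed.

Lemma created L q : (1 <= L)%nat -> (qs L < q)%nat -> exists l, (L <= l)%nat /\ (qs l < q <= qs (S l))%nat.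
Proof.
  intros hL hq. assert (forall n, (q <= qs (L + n))%nat -> exists l, (L <= l)%nat /\ (qs l < q <= qs (S l))%nat).
  { induction n as [|n IH]; intro h.
    - rewrite Nat.add_0_r in h. lia.
    - destruct (Nat.le_gt_cases q (qs (L + n))) as [c|c]; [apply IH; auto|].
      exists (L + n)%nat. split; [lia|]. replace (S (L + n)) with (L + S n)%nat by lia. lia. }
  apply (H0 q). pose proof (qs_ge (L + q) ltac:(lia)). lia.
Qed.

Section W.
Variables (l : nat) (s : nat -> R) (p : nat) (t : nat -> nat).
Hypotheses (hl : (1 <= l)%nat) (HW : StepW f N r xi X (qs l) (qs (S l)) s p t).

Lemma W_sorted : sorted_arrangement X (qs l) s.
Proof. apply HW. Qed.

Lemma W_q2 : (2 <= qs l)%nat.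
Proof. pose proof (qs_ge l hl). lia. Qed.

Lemma not_inside y j : InT l y -> (2 <= j <= qs l)%nat -> ~ (s (j-1)%nat < y < s j).
Proof.
  intros hy hj [h1 h2]. destruct (proj1 (InT_s l _ s p t y HW) hy) as [i [hi <-]].
  pose proof (w_s_lt_inv (qs l) s W_sorted W_q2 (j-1) i ltac:(lia) hi h1).
  pose proof (w_s_lt_inv (qs l) s W_sorted W_q2 i j hi ltac:(lia) h2). lia.
Qed.

Lemma W_p : (1 <= p <= qs l - 1)%nat /\ qs (S l) = (qs l + p)%nat.
Proof. destruct HW as [_ [hp [e _]]]. auto. Qed.

Lemma W_t k : (1 <= k <= p)%nat -> (2 <= t k <= qs l)%nat.
Proof. destruct HW as [_ [_ [_ [ht _]]]]. auto. Qed.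

Lemma newX k : (1 <= k <= p)%nat ->
  X (qs l + k)%nat = newpt f N r xi (qs l) s (t k) /\ InT (S l) (X (qs l + k)%nat) /\
  ~ InT l (X (qs l + k)%nat) /\
  s (t k - 1)%nat + kap r * dx s (t k) <= X (qs l + k)%nat <= s (t k) - kap r * dx s (t k).
Proof.
  intro hk. destruct HW as [Hs [hp [e [ht [_ [_ hX]]]]]].
  assert (E := hX k hk).
  pose proof (w_newpt_bounds (qs l) s Hs W_q2 (t k) (ht k hk)) as hb.
  pose proof (w_dx_pos (qs l) s Hs W_q2 (t k) (ht k hk)) as hd.
  pose proof (kap_bounds r Hr).
  assert (0 < kap r * dx s (t k)) by (apply Rmult_lt_0_compat; lra).
  rewrite <- E in hb. split; [auto|]. split; [|split; [|auto]].
  - exists (qs l + k)%nat. split; auto. lia.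
  - intro hin. apply (not_inside _ (t k) hin (ht k hk)). lra.
Qed.

Lemma sel k0 j : (1 <= k0 <= p)%nat -> (2 <= j <= qs l)%nat ->
  charR f N r xi (qs l) s (t k0) < charR f N r xi (qs l) s j ->
  exists k, (1 <= k <= p)%nat /\ t k = j.
Proof.
  intros hk0 hj hlt. destruct HW as [_ [_ [_ [_ [_ [hmax _]]]]]].
  destruct (Classical_Prop.classic (exists k, (1 <= k <= p)%nat /\ t k = j)) as [c|c]; auto.
  exfalso. assert (charR f N r xi (qs l) s j <= charR f N r xi (qs l) s (t k0)).
  { apply hmax; auto. intros k' hk' e. apply c. exists k'; split; [lia| auto]. }
  lra.
Qed.

Lemma search c : 0 < c < 1 -> ~ InT l c -> exists j, (2 <= j <= qs l)%nat /\ s (j-1)%nat < c < s j.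
Proof.
  intros hc hn.
  assert (hne : forall i, (1 <= i <= qs l)%nat -> s i <> c).
  { intros i hi e. apply hn. apply (proj2 (InT_s l _ s p t c HW)). eauto. }
  assert (h1 : s 1%nat <= c).
  { destruct (proj1 (InT_s l _ s p t 0 HW) (InT_0 l hl)) as [i [hi e]].
    pose proof (w_s_le (qs l) s W_sorted W_q2 1 i ltac:(lia) ltac:(lia) ltac:(lia)). lra. }
  assert (h2 : c < s (qs l)).
  { destruct (proj1 (InT_s l _ s p t 1 HW) (InT_1 l hl)) as [i [hi e]].
    pose proof (w_s_le (qs l) s W_sorted W_q2 i (qs l) ltac:(lia) ltac:(lia) ltac:(lia)). lra. }
  assert (forall n, (1 + n <= qs l)%nat -> c < s (1 + n)%nat -> exists j, (2 <= j <= 1 + n)%nat /\ s (j-1)%nat <= c < s j).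
  { induction n as [|n IH]; intros hn1 hlt; [simpl in hlt; lra|].
    destruct (Rlt_dec c (s (1 + n)%nat)) as [cc|cc].
    - destruct (IH ltac:(lia) cc) as [j [hj e]]. exists j; split; [lia| auto].
    - exists (2 + n)%nat. split; [lia|]. replace (2 + n - 1)%nat with (1 + n)%nat by lia.
      replace (2 + n)%nat with (1 + S n)%nat by lia. lra. }
  pose proof W_q2. destruct (H0 (qs l - 1)%nat ltac:(lia)) as [j [hj [e1 e2]]].
  { replace (1 + (qs l - 1))%nat with (qs l) by lia. auto. }
  exists j. split; [lia|]. split; auto. destruct e1 as [e1|e1]; auto. exfalso; apply (hne (j-1)%nat); [lia| auto].
Qed.

End W.

Lemma hold_near x y z : 0 <= x <= 1 -> 0 <= y <= 1 -> 0 < z -> Rabs (x - y) <= z ^ N -> Rabs (f x - f y) <= H * z.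
Proof.
  intros hx hy hz h. eapply Rle_trans; [apply Hhol; auto|].
  apply Rmult_le_compat_l; [lra|]. apply rootN_le_of; auto.
Qed.

Lemma eventA xb : 0 <= xb <= 1 -> limit_point X xb -> forall T0, -2 * f xb < T0 ->
  forall L, (1 <= L)%nat -> exists l, (L <= l)%nat /\ exists s p t,
    StepW f N r xi X (qs l) (qs (S l)) s p t /\
    exists k0, (1 <= k0 <= p)%nat /\ charR f N r xi (qs l) s (t k0) < T0.
Proof.
  intros hxb hlim T0 hT0 L hL.
  set (M := Rmax H xi). assert (hM : H <= M) by apply Rmax_l.
  set (Kc := 2 * H + (r * M + H * H / (r * xi))).
  assert (hKc' : 0 < H * H / (r * xi)) by (apply Rdiv_lt_0_compat; [nra| nra]).
  assert (hKc : 0 < Kc) by (unfold Kc; nra).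
  set (z := (T0 + 2 * f xb) / (2 * Kc)).
  assert (hz : 0 < z) by (unfold z; apply Rdiv_lt_0_compat; lra).
  assert (hzK : Kc * z = (T0 + 2 * f xb) / 2) by (unfold z; field; lra).
  set (eps := z ^ N / 2).
  assert (hzN : 0 < z ^ N) by (apply pow_lt; auto).
  assert (heps : 0 < eps) by (unfold eps; lra).
  assert (Claim1 : forall l s p t k, (1 <= l)%nat -> StepW f N r xi X (qs l) (qs (S l)) s p t ->
     (1 <= k <= p)%nat -> xb - eps < s (t k - 1)%nat -> s (t k) < xb + eps ->
     charR f N r xi (qs l) s (t k) < T0).
  { intros l s p t k hl HW hk hu hv.
    pose proof (W_t l s p t HW k hk) as hj. pose proof (W_sorted l s p t HW) as Hs. pose proof (W_q2 l hl) as hq.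
    pose proof (w_charR_upper (qs l) s Hs hq (t k) hj) as hup.
    assert (hv01 : 0 <= s (t k) <= 1) by (eapply w_s_in01; eauto; lia).
    assert (hu01 : 0 <= s (t k - 1)%nat <= 1) by (eapply w_s_in01; eauto; lia).
    pose proof (w_dx_pos (qs l) s Hs hq (t k) hj) as hdx. unfold dx in hdx.
    assert (hrt : rt N s (t k) <= z).
    { unfold rt, dx. apply rootN_le_of; auto. unfold eps in *. lra. }
    assert (hf1 : Rabs (f (s (t k)) - f xb) <= H * z).
    { apply hold_near; auto. apply Rabs_le. unfold eps in *; lra. }
    assert (hf2 : Rabs (f (s (t k - 1)%nat) - f xb) <= H * z).
    { apply hold_near; auto. apply Rabs_le. unfold eps in *; lra. }
    apply Rabs_le_inv in hf1. apply Rabs_le_inv in hf2.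
    assert (hrt0 : 0 < rt N s (t k)) by (apply (w_rt_pos (qs l) s Hs hq); auto).
    assert ((r * M + H * H / (r * xi)) * rt N s (t k) <= (r * M + H * H / (r * xi)) * z).
    { apply Rmult_le_compat_l; [|auto]. assert (0 < M) by (unfold M; eapply Rlt_le_trans; [apply HH| apply Rmax_l]). nra. }
    fold M in hup. unfold Kc in hzK. nra. }
  destruct (Classical_Prop.classic (exists l, (L <= l)%nat /\ exists s p t, StepW f N r xi X (qs l) (qs (S l)) s p t /\
     exists k, (1 <= k <= p)%nat /\ xb - eps < s (t k - 1)%nat /\ s (t k) < xb + eps)) as [Hc|NB].
  { destruct Hc as [l [hl [s [p [t [HW [k [hk [hu hv]]]]]]]]]. exists l; split; auto. exists s, p, t; split; auto.
    exists k; split; auto. apply (Claim1 l s p t k); auto; lia. }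
  exfalso.
  pose proof (kap_bounds r Hr) as hk.
  set (eta := kap r * (eps / 2)). assert (heta : 0 < eta) by (unfold eta; apply Rmult_lt_0_compat; lra).
  assert (PK : forall K, exists l, (L <= l)%nat /\ exists y1 y2, InT l y1 /\ InT l y2 /\
      xb - eps < y1 /\ y2 < xb + eps /\ y1 - y2 <= 1 - INR K * eta).
  { induction K as [|K IH].
    - exists L. split; auto. exists 1, 0. split; [apply InT_1; auto|]. split; [apply InT_0; auto|]. simpl. lra.
    - destruct IH as [l [hl [y1 [y2 [hy1 [hy2 [h1 [h2 h3]]]]]]]].
      destruct (hlim (eps / 2) ltac:(lra) (S (qs l))) as [q [hq1 [hq2 hq3]]].
      destruct (created l q ltac:(lia) ltac:(lia)) as [l' [hll' [hq4 hq5]]].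
      destruct (getW l' ltac:(lia)) as [s [p [t HW]]].
      destruct (W_p l' s p t HW) as [hp e].
      set (k := (q - qs l')%nat). assert (hk1 : (1 <= k <= p)%nat) by (unfold k; lia).
      destruct (newX l' s p t ltac:(lia) HW k hk1) as [_ [hin [_ [hb1 hb2]]]].
      replace (qs l' + k)%nat with q in * by (unfold k; lia).
      pose proof (W_t l' s p t HW k hk1) as hj.
      assert (hy1' : InT l' y1) by (apply (InT_mono l l'); auto; lia).
      assert (hy2' : InT l' y2) by (apply (InT_mono l l'); auto; lia).
      pose proof (not_inside l' s p t ltac:(lia) HW y1 (t k) hy1' hj) as n1.
      pose proof (not_inside l' s p t ltac:(lia) HW y2 (t k) hy2' hj) as n2.
      apply Rabs_def2 in hq3. destruct hq3 as [hq3 hq3'].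
      assert (hdx : 0 < s (t k) - s (t k - 1)%nat) by (pose proof (w_dx_pos (qs l') s (W_sorted l' s p t HW) (W_q2 l' ltac:(lia)) (t k) hj); unfold dx in *; lra).
      unfold dx in hb1, hb2.
      assert (0 <= kap r * (s (t k) - s (t k - 1)%nat)) by (apply Rmult_le_pos; lra).
      exists (S l'). split; [lia|].
      destruct (Rle_dec (s (t k - 1)%nat) (xb - eps)) as [cu|cu].
      + exists (X q), y2. split; auto. split; [apply (InT_mono l' (S l')); auto; lia|].
        split; [lra|]. split; auto. rewrite S_INR.
        assert (y1 >= s (t k)) by (destruct (Rle_dec (s (t k)) y1); [lra| exfalso; apply n1; lra]).
        assert (kap r * (s (t k) - s (t k - 1)%nat) >= eta) by (unfold eta; apply Rmult_ge_compat_l; lra).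
        lra.
      + destruct (Rle_dec (xb + eps) (s (t k))) as [cv|cv].
        * exists y1, (X q). split; [apply (InT_mono l' (S l')); auto; lia|]. split; auto.
          split; auto. split; [lra|]. rewrite S_INR.
          assert (y2 <= s (t k - 1)%nat) by (destruct (Rle_dec y2 (s (t k - 1)%nat)); [lra| exfalso; apply n2; lra]).
          assert (kap r * (s (t k) - s (t k - 1)%nat) >= eta) by (unfold eta; apply Rmult_ge_compat_l; lra).
          lra.
        * exfalso. apply NB. exists l'. split; [lia|]. exists s, p, t. split; auto. exists k. split; auto. lra. }
  destruct (INR_archimed eta (1 + 2 * eps) heta) as [K hK].
  destruct (PK K) as [l [_ [y1 [y2 [_ [_ [h1 [h2 h3]]]]]]]]. lra.
Qed.

Lemma filter_all_id (P : nat -> bool) l : (forall i, In i l -> P i = true) -> filter P l = l.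
Proof. induction l as [|a l IH]; intro h; simpl; auto. rewrite (h a (or_introl eq_refl)). f_equal. apply IH. intros; apply h; right; auto. Qed.

Lemma filt_len Is : NoDup Is -> (forall i, In i Is -> (1 <= i)%nat) ->
  (length Is <= S (length (filter (fun i => Nat.leb 2 i) Is)))%nat.
Proof.
  induction Is as [|x Is IH]; intros hnd h; [simpl; lia|].
  apply NoDup_cons_iff in hnd. destruct hnd as [hx hnd].
  replace (filter (fun i => Nat.leb 2 i) (x :: Is)) with
    (if Nat.leb 2 x then x :: filter (fun i => Nat.leb 2 i) Is else filter (fun i => Nat.leb 2 i) Is) by reflexivity.
  destruct (Nat.leb 2 x) eqn:E; cbn [length].
  - specialize (IH hnd ltac:(intros; apply h; right; auto)). lia.
  - apply Nat.leb_gt in E. assert (x = 1%nat) by (specialize (h x (or_introl eq_refl)); lia). subst x.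
    rewrite filter_all_id; [lia|]. intros i hi. apply Nat.leb_le.
    assert (i <> 1%nat) by (intro; subst; contradiction). specialize (h i (or_intror hi)). lia.
Qed.

Lemma iv_main (Q : nat) xb : 0 <= xb <= 1 -> limit_point X xb ->
  (forall l, (2 <= l)%nat -> (qs l - qs (l - 1) <= Q)%nat) ->
  forall q0, (1 <= q0)%nat -> f xb <= f (X q0).
Proof.
  intros hxb hlim HQ q0 hq0.
  destruct (Rle_dec (f xb) (f (X q0))) as [ok|nok]; auto. exfalso.
  set (a := X q0). assert (ha01 : 0 <= a <= 1) by (apply X01; auto).
  set (c0 := f xb - f a). assert (hc0 : 0 < c0) by (unfold c0, a in *; lra).
  set (z := c0 / (4 * H)). assert (hz : 0 < z) by (unfold z; apply Rdiv_lt_0_compat; lra).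
  assert (hHz : H * z = c0 / 4) by (unfold z; field; lra).
  set (rho := z ^ N). assert (hrho : 0 < rho) by (apply pow_lt; auto).
  set (good := fun y => 0 <= y <= 1 /\ Rabs (y - a) <= rho).
  assert (hgood : forall y, good y -> f y <= f xb - 3 * c0 / 4).
  { intros y [hy1 hy2]. pose proof (hold_near y a z hy1 ha01 hz hy2) as h. apply Rabs_le_inv in h. unfold c0 in *. lra. }
  set (T0 := -2 * f xb + c0).
  assert (hT0 : -2 * f xb < T0) by (unfold T0; lra).
  assert (Ha : forall l, (q0 <= l)%nat -> InT l a).
  { intros l hl. exists q0. split; auto. pose proof (qs_ge l ltac:(lia)). lia. }
  pose proof (kap_bounds r Hr) as hk.
  assert (High : forall l s p t, (1 <= l)%nat -> StepW f N r xi X (qs l) (qs (S l)) s p t ->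
     forall j, (2 <= j <= qs l)%nat -> good (s j) \/ good (s (j-1)%nat) -> T0 < charR f N r xi (qs l) s j).
  { intros l s p t hl HW j hj hg.
    pose proof (W_sorted l s p t HW) as Hs. pose proof (W_q2 l hl) as hq.
    destruct (w_charR_lower (qs l) s Hs hq j hj) as [h1 h2].
    assert (0 < r * xi * rt N s j) by (pose proof (w_rt_pos (qs l) s Hs hq j hj); apply Rmult_lt_0_compat; [apply Rmult_lt_0_compat|]; lra).
    destruct hg as [hg|hg]; apply hgood in hg; unfold T0; lra. }
  assert (Sel : forall l s p t k0, (1 <= l)%nat -> StepW f N r xi X (qs l) (qs (S l)) s p t ->
     (1 <= k0 <= p)%nat -> charR f N r xi (qs l) s (t k0) < T0 ->
     forall j, (2 <= j <= qs l)%nat -> good (s j) \/ good (s (j-1)%nat) ->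
     exists k, (1 <= k <= p)%nat /\ t k = j).
  { intros l s p t k0 hl HW hk0 hev j hj hg. apply (sel l s p t hl HW k0 j hk0 hj).
    pose proof (High l s p t hl HW j hj hg). lra. }
  assert (GS : forall l s p t k0, (q0 <= l)%nat -> StepW f N r xi X (qs l) (qs (S l)) s p t ->
     (1 <= k0 <= p)%nat -> charR f N r xi (qs l) s (t k0) < T0 ->
     forall y, InT l y -> y <> a -> exists w, InT (S l) w /\ ~ InT l w /\ w <> a /\
       Rabs (w - a) <= (1 - kap r) * Rabs (y - a)).
  { intros l s p t k0 hl HW hk0 hev y hy hya.
    assert (hl1 : (1 <= l)%nat) by lia.
    pose proof (W_sorted l s p t HW) as Hs. pose proof (W_q2 l hl1) as hq.
    destruct (proj1 (InT_s l _ s p t a HW) (Ha l hl)) as [i [hi ei]].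
    destruct (proj1 (InT_s l _ s p t y HW) hy) as [i' [hi' ei']].
    destruct (Rlt_dec y a) as [cy|cy].
    - assert (hii : (i' < i)%nat) by (apply (w_s_lt_inv (qs l) s Hs hq); auto; lra).
      assert (hj : (2 <= i <= qs l)%nat) by lia.
      destruct (Sel l s p t k0 hl1 HW hk0 hev i hj) as [k [hk1 hk2]].
      { left. rewrite ei. split; auto. rewrite Rminus_diag, Rabs_R0; lra. }
      destruct (newX l s p t hl1 HW k hk1) as [_ [hin [hnin [hb1 hb2]]]].
      rewrite hk2 in hb1, hb2. pose proof (w_dx_pos (qs l) s Hs hq i hj) as hdx. unfold dx in *.
      assert (hy' : y <= s (i - 1)%nat) by (rewrite <- ei'; apply (w_s_le (qs l) s Hs hq); lia).
      rewrite ei in hb1, hb2.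
      exists (X (qs l + k)%nat). split; auto. split; auto.
      assert (0 < kap r * (a - s (i - 1)%nat)) by (apply Rmult_lt_0_compat; lra).
      split; [lra|].
      rewrite Rabs_left by lra. rewrite Rabs_left by lra. nra.
    - assert (cy' : a < y) by (destruct (Req_dec y a); [contradiction| lra]).
      assert (hii : (i < i')%nat) by (apply (w_s_lt_inv (qs l) s Hs hq); auto; lra).
      assert (hj : (2 <= S i <= qs l)%nat) by lia.
      destruct (Sel l s p t k0 hl1 HW hk0 hev (S i) hj) as [k [hk1 hk2]].
      { right. replace (S i - 1)%nat with i by lia. rewrite ei. split; auto. rewrite Rminus_diag, Rabs_R0; lra. }
      destruct (newX l s p t hl1 HW k hk1) as [_ [hin [hnin [hb1 hb2]]]].
      rewrite hk2 in hb1, hb2. pose proof (w_dx_pos (qs l) s Hs hq (S i) hj) as hdx. unfold dx in *.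
      replace (S i - 1)%nat with i in * by lia.
      assert (hy' : s (S i) <= y) by (rewrite <- ei'; apply (w_s_le (qs l) s Hs hq); lia).
      rewrite ei in hb1, hb2, hdx.
      exists (X (qs l + k)%nat). split; auto. split; auto.
      assert (0 < kap r * (s (S i) - a)) by (apply Rmult_lt_0_compat; lra).
      split; [lra|].
      rewrite Rabs_right by lra. rewrite Rabs_right by lra. nra. }
  assert (S1 : forall K L, (1 <= L)%nat -> exists l, (L <= l)%nat /\ exists y, InT l y /\ y <> a /\
      Rabs (y - a) <= (1 - kap r) ^ K).
  { induction K as [|K IH]; intros L hL.
    - exists L. split; auto. destruct (Req_dec a 0) as [e|e].
      + exists 1. split; [apply InT_1; auto|]. split; [lra|]. simpl. rewrite e, Rminus_0_r, Rabs_R1; lra.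
      + exists 0. split; [apply InT_0; auto|]. split; [auto|]. simpl. rewrite Rminus_0_l, Rabs_Ropp, Rabs_pos_eq; lra.
    - destruct (IH L hL) as [l [hl [y [hy [hya hyd]]]]].
      destruct (eventA xb hxb hlim T0 hT0 (Nat.max l q0) ltac:(lia)) as [l' [hl' [s [p [t [HW [k0 [hk0 hev]]]]]]]].
      destruct (GS l' s p t k0 ltac:(lia) HW hk0 hev y) as [w [hw1 [hw2 [hw3 hw4]]]]; auto.
      { apply (InT_mono l l'); auto; lia. }
      exists (S l'). split; [lia|]. exists w. split; auto. split; auto. simpl. nra. }
  assert (S2 : forall L, (1 <= L)%nat -> exists l, (L <= l)%nat /\ exists w, InT (S l) w /\ ~ InT l w /\ good w).
  { intros L hL.
    destruct (pow_lt_1_zero (1 - kap r) ltac:(rewrite Rabs_pos_eq; lra) rho hrho) as [K hK].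
    specialize (hK K (Nat.le_refl K)). rewrite Rabs_pos_eq in hK by (apply pow_le; lra).
    destruct (S1 K L hL) as [l [hl [y [hy [hya hyd]]]]].
    destruct (eventA xb hxb hlim T0 hT0 (Nat.max l q0) ltac:(lia)) as [l' [hl' [s [p [t [HW [k0 [hk0 hev]]]]]]]].
    destruct (GS l' s p t k0 ltac:(lia) HW hk0 hev y) as [w [hw1 [hw2 [hw3 hw4]]]]; auto.
    { apply (InT_mono l l'); auto; lia. }
    exists l'. split; [lia|]. exists w. split; auto. split; auto. split; [apply (InT_01 (S l')); auto|].
    pose proof (Rabs_pos (y - a)). nra. }
  assert (S3 : forall M, exists L, (1 <= L)%nat /\ exists Ls, length Ls = M /\ NoDup Ls /\
      forall y, In y Ls -> InT L y /\ good y).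
  { induction M as [|M IH].
    - exists 1%nat. split; auto. exists nil. split; auto. split; [constructor|]. intros y [].
    - destruct IH as [L [hL [Ls [hlen [hnd hall]]]]].
      destruct (S2 L hL) as [l [hl [w [hw1 [hw2 hw3]]]]].
      exists (S l). split; [lia|]. exists (w :: Ls). split; [simpl; auto|]. split.
      + constructor; auto. intro hin. apply hw2. apply (InT_mono L l); auto. apply hall; auto.
      + intros y [<-|hy]; [split; auto|]. destruct (hall y hy) as [h1 h2]. split; auto.
        apply (InT_mono L (S l)); auto. }
  destruct (S3 (Q + 2)%nat) as [L [hL [Ls [hlen [hnd hall]]]]].
  destruct (eventA xb hxb hlim T0 hT0 L hL) as [l [hl [s [p [t [HW [k0 [hk0 hev]]]]]]]].
  assert (hl1 : (1 <= l)%nat) by lia.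
  pose proof (W_sorted l s p t HW) as Hs. pose proof (W_q2 l hl1) as hq.
  assert (IDX : forall Ls', NoDup Ls' -> (forall y, In y Ls' -> InT l y) ->
     exists Is, NoDup Is /\ length Is = length Ls' /\ forall i, In i Is -> (1 <= i <= qs l)%nat /\ In (s i) Ls').
  { induction Ls' as [|y Ls' IH]; intros hnd' hin'.
    - exists nil. split; [constructor|]. split; auto. intros i [].
    - apply NoDup_cons_iff in hnd'. destruct hnd' as [hy hnd'].
      destruct (IH hnd' ltac:(intros; apply hin'; right; auto)) as [Is [h1 [h2 h3]]].
      destruct (proj1 (InT_s l _ s p t y HW) (hin' y (or_introl eq_refl))) as [i [hi ei]].
      exists (i :: Is). split.
      + constructor; auto. intro hii. apply hy. rewrite <- ei. apply h3; auto.
      + split; [simpl; auto|]. intros i0 [<-|hi0]; [split; auto; left; auto|].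
        destruct (h3 i0 hi0); split; auto; right; auto. }
  destruct (IDX Ls hnd (fun y hy => InT_mono L l y hL hl (proj1 (hall y hy)))) as [Is [h1 [h2 h3]]].
  set (Fi := filter (fun i => Nat.leb 2 i) Is).
  assert (hinc : incl Fi (map t (seq 1 p))).
  { intros i hi. apply filter_In in hi. destruct hi as [hi hi2]. apply Nat.leb_le in hi2.
    destruct (h3 i hi) as [hi3 hi4].
    destruct (Sel l s p t k0 hl1 HW hk0 hev i ltac:(lia)) as [k [hk1 hk2]].
    { left. apply hall; auto. }
    rewrite <- hk2. apply in_map. apply in_seq. lia. }
  pose proof (NoDup_incl_length (NoDup_filter _ h1) hinc) as hlen2.
  rewrite length_map, length_seq in hlen2.
  pose proof (filt_len Is h1 ltac:(intros i hi; apply h3; auto)) as hlen3. fold Fi in hlen3.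
  destruct (W_p l s p t HW) as [hp e].
  pose proof (HQ (S l) ltac:(lia)) as hQ. replace (S l - 1)%nat with l in hQ by lia.
  unfold Fi in *. lia.
Qed.

Lemma shrink xb c gam T0 L0 : 0 <= xb <= 1 -> limit_point X xb -> -2 * f xb < T0 -> 0 < c < 1 -> 0 < gam ->
  (forall l, (1 <= l)%nat -> ~ InT l c) ->
  (forall l a b, (1 <= l)%nat -> InT l a -> InT l b -> a < c < b -> gam <= b - a) ->
  (forall l s p t j, (L0 <= l)%nat -> (1 <= l)%nat -> StepW f N r xi X (qs l) (qs (S l)) s p t ->
     (2 <= j <= qs l)%nat -> s (j-1)%nat < c < s j -> T0 <= charR f N r xi (qs l) s j) -> False.
Proof.
  intros hxb hlim hT0 hc hg hnc hgap hR.
  pose proof (kap_bounds r Hr) as hk.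
  assert (PK : forall K, exists l, (1 <= l)%nat /\ exists a b, InT l a /\ InT l b /\ a < c < b /\ b - a <= (1 - kap r) ^ K).
  { induction K as [|K IH].
    - exists 1%nat. split; auto. exists 0, 1. split; [apply InT_0; auto|]. split; [apply InT_1; auto|]. simpl; lra.
    - destruct IH as [l [hl [a [b [ha [hb [hab hba]]]]]]].
      destruct (eventA xb hxb hlim T0 hT0 (Nat.max l L0) ltac:(lia)) as [l' [hl' [s [p [t [HW [k0 [hk0 hev]]]]]]]].
      assert (hl1 : (1 <= l')%nat) by lia.
      pose proof (W_sorted l' s p t HW) as Hs. pose proof (W_q2 l' hl1) as hq.
      destruct (search l' s p t hl1 HW c hc (hnc l' hl1)) as [j [hj [hc1 hc2]]].
      pose proof (hR l' s p t j ltac:(lia) hl1 HW hj (conj hc1 hc2)) as hRj.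
      destruct (sel l' s p t hl1 HW k0 j hk0 hj ltac:(lra)) as [k [hk1 hk2]].
      destruct (newX l' s p t hl1 HW k hk1) as [_ [hin [hnin [hb1 hb2]]]].
      rewrite hk2 in hb1, hb2. pose proof (w_dx_pos (qs l') s Hs hq j hj) as hdx. unfold dx in *.
      assert (ha' : InT l' a) by (apply (InT_mono l l'); auto; lia).
      assert (hb' : InT l' b) by (apply (InT_mono l l'); auto; lia).
      pose proof (not_inside l' s p t hl1 HW a j ha' hj) as na.
      pose proof (not_inside l' s p t hl1 HW b j hb' hj) as nb.
      assert (a <= s (j-1)%nat) by (destruct (Rle_dec a (s (j-1)%nat)); [auto| exfalso; apply na; lra]).
      assert (s j <= b) by (destruct (Rle_dec (s j) b); [auto| exfalso; apply nb; lra]).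
      assert (hsj : InT (S l') (s j)) by (apply (InT_mono l' (S l')); [auto| lia|]; apply (proj2 (InT_s l' _ s p t _ HW)); exists j; split; [lia| auto]).
      assert (hsj1 : InT (S l') (s (j-1)%nat)) by (apply (InT_mono l' (S l')); [auto| lia|]; apply (proj2 (InT_s l' _ s p t _ HW)); exists (j-1)%nat; split; [lia| auto]).
      assert (hwc : X (qs l' + k)%nat <> c) by (intro e; apply (hnc (S l') ltac:(lia)); rewrite <- e; auto).
      assert (0 < kap r * (s j - s (j-1)%nat)) by (apply Rmult_lt_0_compat; lra).
      exists (S l'). split; [lia|].
      destruct (Rlt_dec (X (qs l' + k)%nat) c) as [cw|cw].
      + exists (X (qs l' + k)%nat), (s j). split; auto. split; auto. split; [lra|]. simpl.
        assert ((1 - kap r) * (s j - s (j-1)%nat) <= (1 - kap r) * (b - a)) by (apply Rmult_le_compat_l; lra).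
        nra.
      + exists (s (j-1)%nat), (X (qs l' + k)%nat). split; auto. split; auto.
        split; [split; [lra|]; destruct (Req_dec (X (qs l' + k)%nat) c); [contradiction| lra]|]. simpl.
        assert ((1 - kap r) * (s j - s (j-1)%nat) <= (1 - kap r) * (b - a)) by (apply Rmult_le_compat_l; lra).
        nra. }
  destruct (pow_lt_1_zero (1 - kap r) ltac:(rewrite Rabs_pos_eq; lra) gam hg) as [K hK].
  specialize (hK K (Nat.le_refl K)). rewrite Rabs_pos_eq in hK by (apply pow_le; lra).
  destruct (PK K) as [l [hl [a [b [ha [hb [hab hba]]]]]]].
  pose proof (hgap l a b hl ha hb hab). lra.
Qed.

Lemma left_approach xb : 0 < xb <= 1 -> limit_point X xb ->
  forall eps, 0 < eps -> forall n, exists q, (n <= q)%nat /\ (1 <= q)%nat /\ xb - eps < X q < xb.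
Proof.
  intros hxb hlim eps heps n.
  destruct (Classical_Prop.classic (exists q, (n <= q)%nat /\ (1 <= q)%nat /\ xb - eps < X q < xb)) as [ok|NL]; auto.
  exfalso.
  set (e' := Rmin eps xb). assert (he1 : e' <= eps) by apply Rmin_l. assert (he2 : e' <= xb) by apply Rmin_r.
  assert (he0 : 0 < e') by (apply Rmin_pos; lra).
  assert (FIN : forall m, exists u, xb - e' <= u < xb /\ forall k, (1 <= k <= m)%nat -> ~ (u < X k < xb)).
  { induction m as [|m IH].
    - exists (xb - e'). split; [lra|]. intros; lia.
    - destruct IH as [u [hu hk]].
      destruct (Classical_Prop.classic (u < X (S m) < xb)) as [c|c].
      + exists (X (S m)). split; [lra|]. intros k hk1.
        destruct (Nat.eq_dec k (S m)) as [->|ne]; [lra|]. intro h. apply (hk k ltac:(lia)). lra.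
      + exists u. split; auto. intros k hk1. destruct (Nat.eq_dec k (S m)) as [->|ne]; auto. apply hk; lia. }
  destruct (FIN n) as [u [hu hfin]].
  assert (NOT : forall k, (1 <= k)%nat -> ~ (u < X k < xb)).
  { intros k hk h. destruct (Nat.le_gt_cases k n) as [c|c]; [apply (hfin k); auto; lia|].
    apply NL. exists k. split; [lia|]. split; auto. lra. }
  assert (NOTT : forall l y, InT l y -> ~ (u < y < xb)).
  { intros l y [k [hk <-]]. apply NOT; lia. }
  set (c := (u + xb) / 2). set (gam := xb - u).
  assert (hgam : 0 < gam) by (unfold gam; lra).
  assert (hgap : forall l a b, (1 <= l)%nat -> InT l a -> InT l b -> a < c < b -> gam <= b - a).
  { intros l a b hl ha hb hab.
    assert (a <= u) by (destruct (Rle_dec a u); [auto| exfalso; apply (NOTT l a ha); unfold c in *; lra]).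
    assert (xb <= b) by (destruct (Rle_dec xb b); [auto| exfalso; apply (NOTT l b hb); unfold c in *; lra]).
    unfold gam; lra. }
  set (theta := 3 * (r * xi * rootN N gam) / 4).
  assert (hth : 0 < theta) by (unfold theta; pose proof (rootN_pos N gam hgam); assert (0 < r * xi) by nra; nra).
  set (z := theta / (4 * H)). assert (hz : 0 < z) by (unfold z; apply Rdiv_lt_0_compat; lra).
  assert (hHz : H * z = theta / 4) by (unfold z; field; lra).
  set (rho := z ^ N). assert (hrho : 0 < rho) by (apply pow_lt; auto).
  destruct (hlim (Rmin rho e') ltac:(apply Rmin_pos; lra) n) as [q0 [hq1 [hq2 hq3]]].
  assert (hm1 : Rmin rho e' <= rho) by apply Rmin_l. assert (hm2 : Rmin rho e' <= e') by apply Rmin_r.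
  apply Rabs_def2 in hq3. destruct hq3 as [hq3 hq4].
  assert (hb0 : xb <= X q0).
  { destruct (Rle_dec xb (X q0)) as [cc|cc]; auto. exfalso. apply NL. exists q0. split; auto. split; auto. lra. }
  set (T0 := -2 * f xb + theta / 2).
  apply (shrink xb c gam T0 q0); auto.
  - lra.
  - unfold T0; lra.
  - unfold c; lra.
  - intros l hl hin. apply (NOTT l c hin). unfold c; lra.
  - intros l s p t j hl0 hl HW hj [hc1 hc2].
    pose proof (W_sorted l s p t HW) as Hs. pose proof (W_q2 l hl) as hq.
    assert (hsj : InT l (s j)) by (apply (proj2 (InT_s l _ s p t _ HW)); exists j; split; [lia| auto]).
    assert (hsj1 : InT l (s (j-1)%nat)) by (apply (proj2 (InT_s l _ s p t _ HW)); exists (j-1)%nat; split; [lia| auto]).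
    pose proof (hgap l _ _ hl hsj1 hsj (conj hc1 hc2)) as hg.
    assert (hxsj : xb <= s j) by (destruct (Rle_dec xb (s j)); [auto| exfalso; apply (NOTT l (s j) hsj); unfold c in *; lra]).
    assert (hb0' : InT l (X q0)) by (exists q0; split; auto; pose proof (qs_ge l hl); pose proof (qs_mono q0 l hq2 hl0); pose proof (qs_ge q0 hq2); lia).
    pose proof (not_inside l s p t hl HW (X q0) j hb0' hj) as nb.
    assert (s j <= X q0) by (destruct (Rle_dec (s j) (X q0)); [auto| exfalso; apply nb; unfold c in *; lra]).
    assert (hf : Rabs (f (s j) - f xb) <= H * z).
    { apply hold_near; auto; [eapply w_s_in01; eauto; lia| lra|]. rewrite Rabs_pos_eq by lra. fold rho. lra. }
    apply Rabs_le_inv in hf.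
    destruct (w_charR_lower (qs l) s Hs hq j hj) as [h1 _].
    assert (hrt : rootN N gam <= rt N s j) by (unfold rt, dx; apply rootN_mono; auto; lra).
    assert (3 * (r * xi * rt N s j) / 4 >= theta) by (unfold theta; assert (0 < r * xi) by nra; nra).
    unfold T0. lra.
Qed.

Lemma right_approach xb : 0 <= xb < 1 -> limit_point X xb ->
  forall eps, 0 < eps -> forall n, exists q, (n <= q)%nat /\ (1 <= q)%nat /\ xb < X q < xb + eps.
Proof.
  intros hxb hlim eps heps n.
  destruct (Classical_Prop.classic (exists q, (n <= q)%nat /\ (1 <= q)%nat /\ xb < X q < xb + eps)) as [ok|NL]; auto.
  exfalso.
  set (e' := Rmin eps (1 - xb)). assert (he1 : e' <= eps) by apply Rmin_l. assert (he2 : e' <= 1 - xb) by apply Rmin_r.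
  assert (he0 : 0 < e') by (apply Rmin_pos; lra).
  assert (FIN : forall m, exists u, xb < u <= xb + e' /\ forall k, (1 <= k <= m)%nat -> ~ (xb < X k < u)).
  { induction m as [|m IH].
    - exists (xb + e'). split; [lra|]. intros; lia.
    - destruct IH as [u [hu hk]].
      destruct (Classical_Prop.classic (xb < X (S m) < u)) as [c|c].
      + exists (X (S m)). split; [lra|]. intros k hk1.
        destruct (Nat.eq_dec k (S m)) as [->|ne]; [lra|]. intro h. apply (hk k ltac:(lia)). lra.
      + exists u. split; auto. intros k hk1. destruct (Nat.eq_dec k (S m)) as [->|ne]; auto. apply hk; lia. }
  destruct (FIN n) as [u [hu hfin]].
  assert (NOT : forall k, (1 <= k)%nat -> ~ (xb < X k < u)).
  { intros k hk h. destruct (Nat.le_gt_cases k n) as [c|c]; [apply (hfin k); auto; lia|].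
    apply NL. exists k. split; [lia|]. split; auto. lra. }
  assert (NOTT : forall l y, InT l y -> ~ (xb < y < u)).
  { intros l y [k [hk <-]]. apply NOT; lia. }
  set (c := (xb + u) / 2). set (gam := u - xb).
  assert (hgam : 0 < gam) by (unfold gam; lra).
  assert (hgap : forall l a b, (1 <= l)%nat -> InT l a -> InT l b -> a < c < b -> gam <= b - a).
  { intros l a b hl ha hb hab.
    assert (a <= xb) by (destruct (Rle_dec a xb); [auto| exfalso; apply (NOTT l a ha); unfold c in *; lra]).
    assert (u <= b) by (destruct (Rle_dec u b); [auto| exfalso; apply (NOTT l b hb); unfold c in *; lra]).
    unfold gam; lra. }
  set (theta := 3 * (r * xi * rootN N gam) / 4).
  assert (hth : 0 < theta) by (unfold theta; pose proof (rootN_pos N gam hgam); assert (0 < r * xi) by nra; nra).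
  set (z := theta / (4 * H)). assert (hz : 0 < z) by (unfold z; apply Rdiv_lt_0_compat; lra).
  assert (hHz : H * z = theta / 4) by (unfold z; field; lra).
  set (rho := z ^ N). assert (hrho : 0 < rho) by (apply pow_lt; auto).
  destruct (hlim (Rmin rho e') ltac:(apply Rmin_pos; lra) n) as [q0 [hq1 [hq2 hq3]]].
  assert (hm1 : Rmin rho e' <= rho) by apply Rmin_l. assert (hm2 : Rmin rho e' <= e') by apply Rmin_r.
  apply Rabs_def2 in hq3. destruct hq3 as [hq3 hq4].
  assert (hb0 : X q0 <= xb).
  { destruct (Rle_dec (X q0) xb) as [cc|cc]; auto. exfalso. apply NL. exists q0. split; auto. split; auto. lra. }
  set (T0 := -2 * f xb + theta / 2).
  apply (shrink xb c gam T0 q0); auto.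
  - lra.
  - unfold T0; lra.
  - unfold c; lra.
  - intros l hl hin. apply (NOTT l c hin). unfold c; lra.
  - intros l s p t j hl0 hl HW hj [hc1 hc2].
    pose proof (W_sorted l s p t HW) as Hs. pose proof (W_q2 l hl) as hq.
    assert (hsj : InT l (s j)) by (apply (proj2 (InT_s l _ s p t _ HW)); exists j; split; [lia| auto]).
    assert (hsj1 : InT l (s (j-1)%nat)) by (apply (proj2 (InT_s l _ s p t _ HW)); exists (j-1)%nat; split; [lia| auto]).
    pose proof (hgap l _ _ hl hsj1 hsj (conj hc1 hc2)) as hg.
    assert (hxsj : s (j-1)%nat <= xb) by (destruct (Rle_dec (s (j-1)%nat) xb); [auto| exfalso; apply (NOTT l _ hsj1); unfold c in *; lra]).
    assert (hb0' : InT l (X q0)) by (exists q0; split; auto; pose proof (qs_ge l hl); pose proof (qs_mono q0 l hq2 hl0); pose proof (qs_ge q0 hq2); lia).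
    pose proof (not_inside l s p t hl HW (X q0) j hb0' hj) as nb.
    assert (X q0 <= s (j-1)%nat) by (destruct (Rle_dec (X q0) (s (j-1)%nat)); [auto| exfalso; apply nb; unfold c in *; lra]).
    assert (hf : Rabs (f (s (j-1)%nat) - f xb) <= H * z).
    { apply hold_near; auto; [eapply w_s_in01; eauto; lia| lra|]. rewrite Rabs_left1 by lra. fold rho. lra. }
    apply Rabs_le_inv in hf.
    destruct (w_charR_lower (qs l) s Hs hq j hj) as [_ h1].
    assert (hrt : rootN N gam <= rt N s j) by (unfold rt, dx; apply rootN_mono; auto; lra).
    assert (3 * (r * xi * rt N s j) / 4 >= theta) by (unfold theta; assert (0 < r * xi) by nra; nra).
    unfold T0. lra.
Qed.

Lemma clamp_lip x y : Rabs (Rmax 0 (Rmin 1 x) - Rmax 0 (Rmin 1 y)) <= Rabs (x - y).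
Proof.
  unfold Rmax, Rmin. repeat (destruct (Rle_dec _ _)); unfold Rabs; repeat (destruct (Rcase_abs _)); lra.
Qed.

Lemma clamp_cont c : continuity_pt (fun x => f (Rmax 0 (Rmin 1 x))) c.
Proof.
  unfold continuity_pt, continue_in, limit1_in, limit_in. intros eps heps.
  set (z := eps / (2 * H)). assert (hz : 0 < z) by (unfold z; apply Rdiv_lt_0_compat; lra).
  exists (z ^ N). split; [apply pow_lt; auto|]. intros x [_ hx]. simpl in *. unfold R_dist in *.
  assert (h01 : forall w, 0 <= Rmax 0 (Rmin 1 w) <= 1).
  { intro w. unfold Rmax, Rmin. repeat (destruct (Rle_dec _ _)); lra. }
  eapply Rle_lt_trans; [apply hold_near; [apply h01| apply h01| exact hz| ]|].
  - eapply Rle_trans; [apply clamp_lip| lra].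
  - unfold z. replace (H * (eps / (2 * H))) with (eps / 2) by (field; lra). lra.
Qed.

Lemma interior_min u y v : 0 <= u -> u < y -> y < v -> v <= 1 -> f y < f u -> f y < f v ->
  exists m, u < m < v /\ local_min_on01 f m.
Proof.
  intros h1 h2 h3 h4 h5 h6.
  set (g := fun x => f (Rmax 0 (Rmin 1 x))).
  assert (hg : forall w, 0 <= w <= 1 -> g w = f w).
  { intros w hw. unfold g. f_equal. unfold Rmax, Rmin. repeat (destruct (Rle_dec _ _)); lra. }
  destruct (continuity_ab_min g u v ltac:(lra) (fun c _ => clamp_cont c)) as [m [hm1 hm2]].
  assert (gm : g m <= f y) by (rewrite <- (hg y) by lra; apply hm1; lra).
  assert (mu : m <> u) by (intro e; subst m; rewrite hg in gm by lra; lra).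
  assert (mv : m <> v) by (intro e; subst m; rewrite hg in gm by lra; lra).
  exists m. split; [lra|]. split; [lra|].
  exists (Rmin (m - u) (v - m)). split; [apply Rmin_pos; lra|].
  intros y' hy' hd. pose proof (Rmin_l (m - u) (v - m)). pose proof (Rmin_r (m - u) (v - m)).
  apply Rabs_def2 in hd. rewrite <- (hg m) by lra. rewrite <- (hg y') by lra. apply hm1; lra.
Qed.

Lemma list_gap xb (L : list R) : exists d, 0 < d /\ forall z, In z L -> ~ (xb < z < xb + d) /\ ~ (xb - d < z < xb).
Proof.
  induction L as [|a L IH].
  - exists 1. split; [lra|]. intros z [].
  - destruct IH as [d [hd h]].
    destruct (Req_dec a xb) as [e|e].
    + exists d. split; auto. intros z [hz|hz]; [subst a; split; lra| auto].
    + exists (Rmin d (Rabs (a - xb))). assert (0 < Rabs (a - xb)) by (apply Rabs_pos_lt; lra).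
      split; [apply Rmin_pos; lra|]. pose proof (Rmin_l d (Rabs (a - xb))). pose proof (Rmin_r d (Rabs (a - xb))).
      intros z [hz|hz].
      * subst a. unfold Rabs in *; destruct (Rcase_abs (z - xb)); split; lra.
      * destruct (h z hz) as [n1 n2]. split; intro; [apply n1| apply n2]; lra.
Qed.

Lemma ii_right xb : 0 <= xb < 1 -> limit_point X xb -> (forall q, (1 <= q)%nat -> f xb <= f (X q)) ->
  finitely_many_local_extrema f -> exists d, 0 < d /\ forall y, 0 <= y <= 1 -> xb <= y < xb + d -> f xb <= f y.
Proof.
  intros hxb hlim hiv [L hL].
  destruct (list_gap xb L) as [d0 [hd0 hgap]].
  destruct (right_approach xb hxb hlim d0 hd0 1) as [q1 [_ [hq1 [hx1 hx2]]]].
  exists (X q1 - xb). split; [lra|]. intros y hy [hy1 hy2].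
  destruct (Rle_dec (f xb) (f y)) as [ok|nok]; auto. exfalso.
  assert (hyx : xb < y) by (destruct (Req_dec xb y); [subst; lra| lra]).
  destruct (right_approach xb hxb hlim (y - xb) ltac:(lra) 1) as [q2 [_ [hq2 [hx3 hx4]]]].
  pose proof (hiv q1 hq1). pose proof (hiv q2 hq2). pose proof (X01 q1 hq1). pose proof (X01 q2 hq2).
  destruct (interior_min (X q2) y (X q1)) as [m [hm hmin]]; try lra.
  - apply (proj1 (hgap m (hL m (or_introl hmin)))). lra.
Qed.

Lemma ii_left xb : 0 < xb <= 1 -> limit_point X xb -> (forall q, (1 <= q)%nat -> f xb <= f (X q)) ->
  finitely_many_local_extrema f -> exists d, 0 < d /\ forall y, 0 <= y <= 1 -> xb - d < y <= xb -> f xb <= f y.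
Proof.
  intros hxb hlim hiv [L hL].
  destruct (list_gap xb L) as [d0 [hd0 hgap]].
  destruct (left_approach xb hxb hlim d0 hd0 1) as [q1 [_ [hq1 [hx1 hx2]]]].
  exists (xb - X q1). split; [lra|]. intros y hy [hy1 hy2].
  destruct (Rle_dec (f xb) (f y)) as [ok|nok]; auto. exfalso.
  assert (hyx : y < xb) by (destruct (Req_dec xb y); [subst; lra| lra]).
  destruct (left_approach xb hxb hlim (xb - y) ltac:(lra) 1) as [q2 [_ [hq2 [hx3 hx4]]]].
  pose proof (hiv q1 hq1). pose proof (hiv q2 hq2). pose proof (X01 q1 hq1). pose proof (X01 q2 hq2).
  destruct (interior_min (X q1) y (X q2)) as [m [hm hmin]]; try lra.
  - apply (proj2 (hgap m (hL m (or_introl hmin)))). lra.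
Qed.

Lemma ii_main xb : 0 <= xb <= 1 -> limit_point X xb -> (forall q, (1 <= q)%nat -> f xb <= f (X q)) ->
  finitely_many_local_extrema f -> local_min_on01 f xb.
Proof.
  intros hxb hlim hiv hfin. split; auto.
  assert (R : exists d, 0 < d /\ forall y, 0 <= y <= 1 -> xb <= y < xb + d -> f xb <= f y).
  { destruct (Rlt_dec xb 1) as [c|c]; [apply ii_right; auto; lra|].
    exists 1. split; [lra|]. intros y hy hy'. replace y with xb by lra. lra. }
  assert (Lf : exists d, 0 < d /\ forall y, 0 <= y <= 1 -> xb - d < y <= xb -> f xb <= f y).
  { destruct (Rlt_dec 0 xb) as [c|c]; [apply ii_left; auto; lra|].
    exists 1. split; [lra|]. intros y hy hy'. replace y with xb by lra. lra. }
  destruct R as [d1 [hd1 h1]]. destruct Lf as [d2 [hd2 h2]].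
  exists (Rmin d1 d2). split; [apply Rmin_pos; auto|].
  pose proof (Rmin_l d1 d2). pose proof (Rmin_r d1 d2).
  intros y hy hd. apply Rabs_def2 in hd.
  destruct (Rle_dec xb y); [apply h1; auto; lra| apply h2; auto; lra].
Qed.

Lemma lp01 x : limit_point X x -> 0 <= x <= 1.
Proof.
  intros hl. split.
  - destruct (Rle_dec 0 x) as [c|c]; auto. exfalso.
    destruct (hl (- x) ltac:(lra) 1%nat) as [q [_ [hq h]]]. pose proof (X01 q hq). apply Rabs_def2 in h. lra.
  - destruct (Rle_dec x 1) as [c|c]; auto. exfalso.
    destruct (hl (x - 1) ltac:(lra) 1%nat) as [q [_ [hq h]]]. pose proof (X01 q hq). apply Rabs_def2 in h. lra.
Qed.

Lemma lim_ge x c : limit_point X x -> (forall q, (1 <= q)%nat -> c <= f (X q)) -> c <= f x.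
Proof.
  intros hl hc. destruct (Rle_dec c (f x)) as [ok|nok]; auto. exfalso.
  set (z := (c - f x) / (2 * H)). assert (hz : 0 < z) by (unfold z; apply Rdiv_lt_0_compat; lra).
  destruct (hl (z ^ N) ltac:(apply pow_lt; auto) 1%nat) as [q [_ [hq h]]].
  pose proof (hold_near (X q) x z (X01 q hq) (lp01 x hl) hz ltac:(lra)) as hh.
  apply Rabs_le_inv in hh. pose proof (hc q hq).
  assert (H * z = (c - f x) / 2) by (unfold z; field; lra). lra.
Qed.
End Run.

Lemma mk_subseq (X : nat -> R) (xb : R) (P : R -> Prop) :
  (forall eps, 0 < eps -> forall n, exists q, (n <= q)%nat /\ (1 <= q)%nat /\ P (X q) /\ Rabs (X q - xb) < eps) ->
  exists phi : nat -> nat, (forall n, (1 <= phi n)%nat /\ (phi n < phi (S n))%nat) /\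
    (forall n, P (X (phi n))) /\ Un_cv (fun n => X (phi n)) xb.
Proof.
  intros h.
  assert (G : forall m n : nat, {q : nat | (n <= q)%nat /\ (1 <= q)%nat /\ P (X q) /\ Rabs (X q - xb) < / (INR m + 1)}).
  { intros m n. apply constructive_indefinite_description. apply h. apply Rinv_0_lt_compat. pose proof (pos_INR m); lra. }
  set (phi := fix g (k : nat) : nat := match k with O => proj1_sig (G O 1%nat) | S k' => proj1_sig (G k (S (g k'))) end).
  assert (hphi : forall k, (1 <= phi k)%nat /\ P (X (phi k)) /\ Rabs (X (phi k) - xb) < / (INR k + 1)).
  { intro k. destruct k.
    - change (phi 0%nat) with (proj1_sig (G 0%nat 1%nat)). destruct (G 0%nat 1%nat) as [q hq]. cbn [proj1_sig]. tauto.
    - change (phi (S k)) with (proj1_sig (G (S k) (S (phi k)))). destruct (G (S k) (S (phi k))) as [q hq]. cbn [proj1_sig]. tauto. }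
  assert (hinc : forall k, (phi k < phi (S k))%nat).
  { intro k. change (phi (S k)) with (proj1_sig (G (S k) (S (phi k)))). destruct (G (S k) (S (phi k))) as [q hq]; cbn [proj1_sig]. lia. }
  exists phi. split; [intro n; split; [apply hphi| apply hinc]|]. split; [intro n; apply hphi|].
  intros eps heps. destruct (INR_archimed eps 1 heps) as [M hM]. exists M. intros n hn. unfold R_dist.
  apply Rlt_le_trans with (/ (INR n + 1)); [apply hphi|].
  assert (hM1 : 0 < INR M + 1) by (pose proof (pos_INR M); lra).
  apply Rle_trans with (/ (INR M + 1)).
  - apply Rinv_le_contravar; auto. apply le_INR in hn. lra.
  - apply Rmult_le_reg_l with (INR M + 1); auto. rewrite Rinv_r by lra. nra.
Qed.

Theorem theorem1 (f : R -> R) (N : nat) (r xi H : R) (X : nat -> R)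
  (qs : nat -> nat) (Q : nat) (xb : R) :
  (1 <= N)%nat -> 1 < r -> 0 < xi -> 0 < H ->
  holder f H N ->
  PLT_run f N r xi X qs ->
  (forall l, (2 <= l)%nat -> (qs l - qs (l - 1) <= Q)%nat) ->
  0 <= xb <= 1 ->
  limit_point X xb ->
  (* (i) *)
  (0 < xb < 1 ->
     (exists phi : nat -> nat,
        (forall n, (1 <= phi n)%nat /\ (phi n < phi (S n))%nat) /\
        (forall n, X (phi n) < xb) /\ Un_cv (fun n => X (phi n)) xb) /\
     (exists phi : nat -> nat,
        (forall n, (1 <= phi n)%nat /\ (phi n < phi (S n))%nat) /\
        (forall n, xb < X (phi n)) /\ Un_cv (fun n => X (phi n)) xb)) /\
  (* (ii) *)
  (finitely_many_local_extrema f -> local_min_on01 f xb) /\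
  (* (iii) *)
  (forall xh, limit_point X xh -> f xb = f xh) /\
  (* (iv) *)
  (forall q, (1 <= q)%nat -> f xb <= f (X q)).
Proof.
  intros HN Hr Hxi HH Hhol Hrun HQ Hxb Hlim.
  assert (IV : forall x, 0 <= x <= 1 -> limit_point X x -> forall q, (1 <= q)%nat -> f x <= f (X q)).
  { intros x hx hl q hq. exact (iv_main f N r xi H X qs HN Hr Hxi HH Hhol Hrun Q x hx hl HQ q hq). }
  split; [|split; [|split]].
  - intros hx. split.
    + apply (mk_subseq X xb (fun y => y < xb)).
      intros eps heps n. destruct (left_approach f N r xi H X qs HN Hr Hxi HH Hhol Hrun xb ltac:(lra) Hlim eps heps n) as [q [h1 [h2 [h3 h4]]]].
      exists q. split; auto. split; auto. split; [lra|]. apply Rabs_def1; lra.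
    + apply (mk_subseq X xb (fun y => xb < y)).
      intros eps heps n. destruct (right_approach f N r xi H X qs HN Hr Hxi HH Hhol Hrun xb ltac:(lra) Hlim eps heps n) as [q [h1 [h2 [h3 h4]]]].
      exists q. split; auto. split; auto. split; [lra|]. apply Rabs_def1; lra.
  - intro hfin. exact (ii_main f N r xi H X qs HN Hr Hxi HH Hhol Hrun xb Hxb Hlim (IV xb Hxb Hlim) hfin).
  - intros xh hxh.
    pose proof (lp01 f N r xi X qs HN Hr Hxi Hrun xh hxh) as hxh01.
    pose proof (lim_ge f N r xi H X qs HN Hr Hxi HH Hhol Hrun xh (f xb) hxh (IV xb Hxb Hlim)).
    pose proof (lim_ge f N r xi H X qs HN Hr Hxi HH Hhol Hrun xb (f xh) Hlim (IV xh hxh01 hxh)).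
    lra.
  - apply IV; auto.
Qed.
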